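(* With the notation below, for every nonzero triple labeling $J:\mathcal H_\kappa\to\mathscr T$, the set $J^{(1)}(V^{(3)})$, viewed as a subset of $O_m$ via $|ij\rangle\mapsto(i,j)$, is a valid set. Conversely, for every valid set $S\subseteq O_m$ there exists a nonzero triple labeling $J$ with $J^{(1)}(V^{(3)})=S$, and it is unique up to replacing $J$ by $J\circ\sigma$ for bijections $\sigma$ of $\mathcal H_\kappa$ satisfying $\sigma(V^{(k)})=V^{(k)}$ for $k=1,2,3$.
   Context: Let $m>1$ be odd, $\kappa=\frac{m^2-1}2$, $a=\frac{m+1}2$, $\bar i=m+1-i$. $O_m=([m]\times[m])\setminus\{(a,a)\}$; $\tau(i,j)=(j,\bar i)$ and $\iota(S)=O_m\setminus S$; $S\subseteq O_m$ is valid if $|S|=\kappa$, $\tau(S)=\iota(S)$, and $|\{j:(i,j)\in S\}|=|i-\bar i|$ for all $i\in[m]$. $\mathcal H_\kappa$ is the set of $(i,j,k)\in[\kappa+1]^3$ with at least two coordinates equal to $1$, fixed with a total order; $y^0=(1,1,1)$, $V^{(1)}=\{(i,1,1):i\ge2\}$, $V^{(2)}=\{(1,j,1):j\ge2\}$, $V^{(3)}=\{(1,1,k):k\ge2\}$. Its $k$-slices form the set partition $E^{(k)}$ consisting of $e^{(k)}=V^{(k+1)}\cup V^{(k+2)}\cup\{y^0\}$ (indices mod 3, $|e^{(k)}|=m^2$) and the singletons $\{y\}$, $y\in V^{(k)}$. Let $|ij\rangle$ ($i,j\in[m]$) be the standard basis of $\mathbb C^{m\times m}$ and $|1\rangle,\dots,|m^2\rangle$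 the standard basis of $\mathbb C^{m^2}$. Let $\mathscr T=\{(|ij\rangle,|jl\rangle,|li\rangle):i,j,l\in[m]\}$; a triple labeling is a map $J=(J^{(1)},J^{(2)},J^{(3)}):\mathcal H_\kappa\to\mathscr T$. Let $\Gamma=\mathbb C[X^{(k)}_i:k\in[3],i\in[m]]$, fix a bijection $\varphi:O_m\to\{2,\dots,m^2\}$, and define $\Gamma$-linear maps $A^{(k)}:\Gamma^{m\times m}\to\Gamma^{m^2}$ by $A^{(k)}|aa\rangle=X^{(k)}_a|1\rangle$; $A^{(k)}|i\bar i\rangle=|\varphi(i,\bar i)\rangle+X^{(k)}_i|1\rangle$ for $i\neq a$; $A^{(k)}|ij\rangle=|\varphi(i,j)\rangle$ for $j\neq\bar i$. For a labeling $J$ let $AJ$ be the labeling $y\mapsto(A^{(1)}J^{(1)}(y),A^{(2)}J^{(2)}(y),A^{(3)}J^{(3)}(y))$ and $\mathrm{eval}_{\mathcal H_\kappa}(AJ)=\prod_{k=1}^3\prod_{e\in E^{(k)}}\det(AJ)^{(k)}|_e\in\Gamma$, where $\det L|_e$ is the determinant of the $|e|\times|e|$ matrix whose columns are $L(s)$, $s\in e$ in the fixed order, truncated to their first $|e|$ coordinates. Let $\mathcal X=\prod_{k=1}^3X^{(k)}_a\prod_{i=1}^m(X^{(k)}_i)^{|i-\bar i|}$. A triple labeling $J$ is nonzero if the coefficient of the monomial $\mathcal X$ in $\mathrm{eval}_{\mathcal H_\kappa}(AJ)$ is nonzero. *)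

(* Defs.v *)
From HB Require Import structures.
From mathcomp Require Import all_boot all_order all_algebra all_fingroup all_field.
Set Implicit Arguments. Unset Strict Implicit. Unset Printing Implicit Defensive.
Import GRing.Theory.
Local Open Scope ring_scope.

(* C is modelled by algC.  C[x_0,...,x_(n-1)] is the iterated polynomial ring
   MP n = (...(C[x_0])[x_1]...)[x_(n-1)]. *)
Fixpoint MP (n : nat) : comNzRingType :=
  match n with 0 => algC | n'.+1 => {poly MP n'} end.

(* the variable x_v in MP n (0 if v >= n) *)
Fixpoint mvar (n v : nat) {struct n} : MP n :=
  match n return MP n with
  | 0 => 0
  | n'.+1 => if v == n' then 'X else (mvar n' v)%:P
  end.

(* coefficient of the monomial prod_v x_v^(e v) *)
Fixpoint mcoef (n : nat) (e : nat -> nat) {struct n} : MP n -> algC :=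
  match n return MP n -> algC with
  | 0 => fun p => p
  | n'.+1 => fun p => mcoef e (p`_(e n'))
  end.

(* Gamma = C[X^(k)_i : k in [3], i in [m]]; X^(k)_i is variable number k*m+i
   (0-based k and i). *)
Definition Gamma (m : nat) := MP (3 * m).
Definition Xv (m : nat) (k : 'I_3) (i : 'I_m) : Gamma m := mvar (3 * m) (k * m + i).

(* i-bar = m+1-i becomes rev_ord i (value m-1-i); the centre a=(m+1)/2 becomes m./2 *)
Definition Om (m : nat) : {set 'I_m * 'I_m} :=
  [set p | (val p.1 != m./2) || (val p.2 != m./2)].

Definition tau (m : nat) (p : 'I_m * 'I_m) : 'I_m * 'I_m := (p.2, rev_ord p.1).

Definition kap (m : nat) : nat := (m ^ 2).-1./2.

Definition valid (m : nat) (S : {set 'I_m * 'I_m}) : bool :=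
  [&& S \subset Om m, #|S| == kap m, [set tau p | p in S] == Om m :\: S &
      [forall i : 'I_m, #|[set j : 'I_m | (i, j) \in S]| == `|i - rev_ord i|%N]].

(* (i,j,k) in [kappa+1]^3, 0-based, with at least two coordinates equal to 0
   (i.e. equal to 1 in the paper's 1-based convention). *)
Definition inH (K : nat) (t : 'I_K.+1 * 'I_K.+1 * 'I_K.+1) : bool :=
  (2 <= count (fun x : nat => x == 0) [:: val t.1.1; val t.1.2; val t.2])%N.

Definition H (m : nat) := {t : 'I_(kap m).+1 * 'I_(kap m).+1 * 'I_(kap m).+1 | inH t}.

Definition y0 (m : nat) : H m := exist _ (ord0, ord0, ord0) isT.

Definition coord3 (K : nat) (t : 'I_K * 'I_K * 'I_K) (k : 'I_3) : 'I_K :=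
  match val k with 0 => t.1.1 | 1 => t.1.2 | _ => t.2 end.

(* V k = V^(k+1) of the paper: the elements whose k-th coordinate is not 1 *)
Definition V (m : nat) (k : 'I_3) : {set H m} :=
  [set y : H m | val (coord3 (val y) k) != 0%N].

Definition ebig (m : nat) (k : 'I_3) : {set H m} :=
  V m (ordS k) :|: V m (ordS (ordS k)) :|: [set y0 m].

Definition Eslice (m : nat) (k : 'I_3) : {set {set H m}} :=
  ebig m k |: [set [set y] | y in V m k].

(* A triple (|ij>,|jl>,|li>) of T is encoded by (i,j,l); this encoding is a
   bijection [m]^3 -> T.  A triple labeling is J : H m -> 'I_m*'I_m*'I_m. *)
Definition labeling (m : nat) := H m -> 'I_m * 'I_m * 'I_m.

(* J^(k+1)(y) as a pair (row,col) of the basis vector |row col> *)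
Definition Jc (m : nat) (k : 'I_3) (J : labeling m) (y : H m) : 'I_m * 'I_m :=
  let t := J y in
  match val k with
  | 0 => (t.1.1, t.1.2)
  | 1 => (t.1.2, t.2)
  | _ => (t.2, t.1.1)
  end.

(* A^(k+1)|ij> in Gamma^(m^2); coordinate r (0-based, so r = 0 is |1>). *)
Definition Acol (m : nat) (phi : 'I_m * 'I_m -> 'I_(m ^ 2)) (k : 'I_3)
    (p : 'I_m * 'I_m) (r : nat) : Gamma m :=
  let: (i, j) := p in
  if (val i == m./2) && (val j == m./2) then
    (if r == 0%N then Xv k i else 0)
  else if j == rev_ord i then
    (if r == val (phi p) then 1 else 0) + (if r == 0%N then Xv k i else 0)
  else (if r == val (phi p) then 1 else 0).

(* det L|_e : columns L(s), s in e in the fixed total order (given by the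
   injective rank function rk), truncated to the first |e| coordinates. *)
Definition ordered (m : nat) (rk : H m -> nat) (e : {set H m}) : seq (H m) :=
  sort (fun x y => (rk x <= rk y)%N) (enum e).

Definition detRes (m : nat) (rk : H m -> nat) (L : H m -> nat -> Gamma m)
    (e : {set H m}) : Gamma m :=
  \det (\matrix_(r < #|e|, c < #|e|) L (nth (y0 m) (ordered rk e) c) r).

Definition evalH (m : nat) (phi : 'I_m * 'I_m -> 'I_(m ^ 2)) (rk : H m -> nat)
    (J : labeling m) : Gamma m :=
  \prod_(k < 3) \prod_(e in Eslice m k)
     detRes rk (fun y => Acol phi k (Jc k J y)) e.

(* exponent of variable number v = k*m+i in the monomial
   calX = prod_k X^(k)_a prod_i (X^(k)_i)^|i - ibar| *)
Definition calX_exp (m : nat) (v : nat) : nat :=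
  if (v < 3 * m)%N then
    let i := (v %% m)%N in ((i == m./2) + `|i - (m.-1 - i)%N|)%N
  else 0.

Definition nonzeroJ (m : nat) (phi : 'I_m * 'I_m -> 'I_(m ^ 2)) (rk : H m -> nat)
    (J : labeling m) : Prop :=
  mcoef (calX_exp m) (evalH phi rk J) != 0.

Definition J1V3 (m : nat) (J : labeling m) : {set 'I_m * 'I_m} :=
  [set Jc ord0 J y | y in V m (inord 2)].

(* Main.v *)
Require Import Defs.
From HB Require Import structures.
From mathcomp Require Import all_boot all_order all_algebra all_fingroup all_field.
From Stdlib Require Import Lia.
From mathcomp Require Import zify.
From Stdlib Require Import FunctionalExtensionality.
Set Implicit Arguments. Unset Strict Implicit. Unset Printing Implicit Defensive.
Import GRing.Theory.

Section MonA.
Local Open Scope ring_scope.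

Fixpoint mon (n : nat) (f : nat -> nat) : MP n :=
  match n return MP n with
  | 0 => 1
  | n'.+1 => (mon n' f)%:P * 'X^(f n')
  end.

Lemma eq_mon n f g : (forall v, (v < n)%N -> f v = g v) -> mon n f = mon n g.
Proof.
elim: n => [//|n IH] H /=; rewrite (IH (fun v Hv => H v (ltnW Hv))) H //.
Qed.

Lemma monD n f g : mon n f * mon n g = mon n (fun v => (f v + g v)%N).
Proof.
elim: n => [|n IH] /=; first by rewrite mulr1.
rewrite -IH polyCM exprD.
by rewrite mulrACA.
Qed.

Lemma mon0 n : mon n (fun _ => 0%N) = 1.
Proof. by elim: n => [//|n IH] /=; rewrite IH expr0 mulr1. Qed.

Lemma mvar_mon n v : (v < n)%N -> mvar n v = mon n (fun w => (w == v) : nat).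
Proof.
elim: n => [//|n IH] Hv /=.
case: eqP => [->|Hne].
  rewrite eqxx expr1 (@eq_mon n _ (fun _ => 0%N)) ?mon0 ?mul1r //.
  by move=> w Hw; rewrite (ltn_eqF Hw).
have Hv' : (v < n)%N by rewrite ltn_neqAle (introN eqP Hne) -ltnS.
rewrite IH // (_ : (n == v) = false) ?expr0 ?mulr1 //.
by apply/eqP=> E; apply: Hne; rewrite E.
Qed.

Lemma prod_mon n (I : Type) (r : seq I) (P : pred I) (f : I -> nat -> nat) :
  \prod_(i <- r | P i) mon n (f i) = mon n (fun v => \sum_(i <- r | P i) f i v)%N.
Proof.
elim: r => [|x r IH].
  rewrite big_nil -(mon0 n); apply: eq_mon => v _; by rewrite big_nil.
rewrite big_cons IH; case Px: (P x).
  by rewrite monD; apply: eq_mon => v _; rewrite big_cons Px.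
by apply: eq_mon => v _; rewrite big_cons Px.
Qed.

Lemma mcoef0 n e : mcoef e (0 : MP n) = 0.
Proof. by elim: n => [//|n IH] /=; rewrite coef0 IH. Qed.

Lemma mcoefN n e (p : MP n) : mcoef e (- p) = - mcoef e p.
Proof. by elim: n p => [//|n IH] p /=; rewrite coefN IH. Qed.

Lemma mcoef_sign n e (b : nat) (p : MP n) : mcoef e ((-1) ^+ b * p) = (-1) ^+ b * mcoef e p.
Proof.
elim: b => [|b IH]; first by rewrite !expr0 !mul1r.
by rewrite !exprS -!mulrA !mulN1r mcoefN IH.
Qed.

Lemma mcoef_mon n e f :
  mcoef e (mon n f) = if all (fun v => e v == f v) (iota 0 n) then 1 else 0.
Proof.
elim: n => [//|n IH].
rewrite (_ : iota 0 n.+1 = iota 0 n ++ [:: n]); last by rewrite -addn1 iotaD.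
rewrite all_cat /= andbT.
rewrite coefCM coefXn.
case: (e n == f n); last by rewrite mulr0 mcoef0 andbF.
by rewrite mulr1 andbT IH.
Qed.

End MonA.


Section Hg.
Variable m : nat.

Notation K := (kap m).

Definition cd (k : 'I_3) (y : H m) : 'I_K.+1 := coord3 (val y) k.

Lemma inV k y : (y \in V m k) = (val (cd k y) != 0%N).
Proof. by rewrite inE. Qed.

Lemma V_disj k k' y : y \in V m k -> y \in V m k' -> k = k'.
Proof.
rewrite !inV /cd; case: y => [[[x1 x2] x3] Ht] /=.
move: Ht; rewrite /inH /=.
case: k => [[|[|[|//]]] ?]; case: k' => [[|[|[|//]]] ?] //= Hc;
  try (by move=> *; apply/val_inj);
  move: Hc; do 3 (case: eqP => //).
Qed.

Lemma cd_eq0 k k' y : y \in V m k -> k != k' -> val (cd k' y) = 0%N.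
Proof.
move=> Hy Hk; apply/eqP; apply: contraR Hk => Hn.
by apply/eqP; apply: V_disj Hy _; rewrite inV.
Qed.

Lemma y0_notin k : y0 m \notin V m k.
Proof. by rewrite inV /cd /=; case: k => [[|[|[|]]] ?]. Qed.

Lemma H_ext (y y' : H m) : (forall k, cd k y = cd k y') -> y = y'.
Proof.
case: y => [[[x1 x2] x3] Ht]; case: y' => [[[z1 z2] z3] Ht'] E.
apply/val_inj => /=.
have E0 := E (@Ordinal 3 0 isT); have E1 := E (@Ordinal 3 1 isT);
have E2 := E (@Ordinal 3 2 isT); rewrite /cd /coord3 /= in E0 E1 E2.
by rewrite E0 E1 E2.
Qed.

Lemma V_cd_inj k : {in V m k &, injective (cd k)}.
Proof.
move=> y y' Hy Hy' E; apply: H_ext => k'.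
case: (k =P k') => [<- //|/eqP Hne].
by apply/val_inj; rewrite (cd_eq0 Hy Hne) (cd_eq0 Hy' Hne).
Qed.

Definition mkT (k : 'I_3) (j : 'I_K.+1) : 'I_K.+1 * 'I_K.+1 * 'I_K.+1 :=
  (if val k == 0%N then j else ord0, if val k == 1%N then j else ord0,
   if (val k == 0%N) || (val k == 1%N) then ord0 else j).

Lemma mkT_inH k j : inH (mkT k j).
Proof.
rewrite /inH /mkT; case: k => [[|[|[|//]]] ?] /=;
  by case: (val j == 0%N).
Qed.

Definition mkV k j : H m := exist _ (mkT k j) (mkT_inH k j).

Lemma cd_mkV k j : cd k (mkV k j) = j.
Proof. by rewrite /cd /mkV /mkT /=; case: k => [[|[|[|//]]] ?]. Qed.

Lemma mkV_in k j : val j != 0%N -> mkV k j \in V m k.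
Proof. by rewrite inV cd_mkV. Qed.

Lemma card_V k : #|V m k| = K.
Proof.
rewrite -(card_in_imset (@V_cd_inj k)).
have -> : [set cd k y | y in V m k] = [set~ ord0].
  apply/setP => j; rewrite !inE; apply/imsetP/idP.
    case=> y Hy ->; rewrite inV in Hy; apply: contra Hy => /eqP ->; by [].
  move=> Hj; exists (mkV k j); last by rewrite cd_mkV.
  by apply: mkV_in; apply: contra Hj => /eqP E; apply/eqP/val_inj.
by rewrite cardsC1 card_ord.
Qed.


Lemma ordS_ne (k : 'I_3) : ordS k != ordS (ordS k).
Proof. by case: k => [[|[|[|]]] ?]. Qed.

Lemma card_ebig_gen k : #|ebig m k| = (K + K).+1.
Proof.
rewrite /ebig cardsU cardsU !card_V cards1.
have -> : V m (ordS k) :&: V m (ordS (ordS k)) = set0.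
  apply/setP => y; rewrite in_setI in_set0; apply/negbTE/negP => /andP [h1 h2].
  by move: (ordS_ne k); rewrite -(V_disj h1 h2) eqxx.
rewrite cards0 subn0.
have -> : (V m (ordS k) :|: V m (ordS (ordS k))) :&: [set y0 m] = set0.
  apply/setP => y; rewrite in_setI in_setU in_set1 in_set0.
  apply/negbTE/negP => /andP [/orP h1 /eqP h2].
  by move: h1; rewrite h2 !(negbTE (y0_notin _)); case.
by rewrite cards0 subn0 addn1.
Qed.

Hypothesis m_gt1 : (1 < m)%N.
Hypothesis m_odd : odd m.

Lemma kap_eq : (K + K).+1 = m ^ 2.
Proof.
rewrite /kap; have h1 : (0 < m ^ 2)%N by rewrite expn_gt0; case: m m_gt1.
have h2 : odd (m ^ 2) by rewrite oddX m_odd orbT.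
move: h1 h2; case: (m ^ 2) => [//|N] _ /= h2.
have := odd_double_half N; rewrite (negbTE h2) -muln2 add0n.
lia.
Qed.

Lemma card_ebig k : #|ebig m k| = m ^ 2.
Proof. by rewrite card_ebig_gen kap_eq. Qed.

End Hg.


Section B.
Variable m : nat.
Hypothesis m_gt1 : (1 < m)%N.
Hypothesis m_odd : odd m.

Lemma half_ltm : (m./2 < m)%N.
Proof.
have E := odd_double_half m; rewrite m_odd -muln2 in E; lia.
Qed.

Definition ca : 'I_m := Ordinal half_ltm.
Definition cc : 'I_m * 'I_m := (ca, ca).

Lemma rev_ca : rev_ord ca = ca.
Proof.
apply/val_inj => /=; have E := odd_double_half m; rewrite m_odd -muln2 in E; lia.
Qed.

Lemma in_Om (p : 'I_m * 'I_m) : (p \in Om m) = (p != cc).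
Proof.
rewrite inE; case: p => i j /=; rewrite /cc xpair_eqE -!(inj_eq val_inj) /=.
by rewrite negb_and.
Qed.

Definition adg (p : 'I_m * 'I_m) : bool := p.2 == rev_ord p.1.

Variable phi : 'I_m * 'I_m -> 'I_(m ^ 2).
Hypothesis phi_inj : {in Om m &, injective phi}.
Hypothesis phi_ne1 : forall p, p \in Om m -> val (phi p) != 0%N.

Local Open Scope ring_scope.

Lemma Acol_val k p (r : nat) :
  Acol phi k p r = (if p == cc then 0 else (r == val (phi p))%:R)
                   + (if (r == 0%N) && adg p then Xv k p.1 else 0).
Proof.
case: p => i j; rewrite /Acol /adg /cc /=.
have -> : (val i == m./2) && (val j == m./2) = ((i, j) == (ca, ca)).
  by rewrite xpair_eqE -!(inj_eq val_inj).
case: eqP => [[-> ->]|Hne].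
  by rewrite rev_ca eqxx andbT add0r.
by case: eqP => _; case: eqP => _ //=; rewrite ?andbT ?andbF ?addr0.
Qed.

Lemma Acol0 k p : Acol phi k p 0 = if adg p then Xv k p.1 else 0.
Proof.
rewrite Acol_val eqxx /=; case: eqP => [->|Hne]; first by rewrite add0r.
have := phi_ne1 (p:=p); rewrite in_Om => /(_ (introN eqP Hne)).
by rewrite eq_sym => /negbTE ->; rewrite add0r.
Qed.

Lemma det_noninj N k (g : 'I_N -> 'I_m * 'I_m) :
  ~~ injectiveb g -> \det (\matrix_(r < N, c < N) Acol phi k (g c) r) = 0.
Proof.
move=> /injectivePn [c1 [c2 Hne Eg]].
rewrite -det_tr; apply: (determinant_alternate Hne) => r.
by rewrite !mxE Eg.
Qed.

Lemma m2_gt0 : (0 < m ^ 2)%N.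
Proof. by rewrite expn_gt0; case: m m_gt1. Qed.

Definition o0 : 'I_(m ^ 2) := Ordinal m2_gt0.

Definition psi (p : 'I_m * 'I_m) : 'I_(m ^ 2) := if p == cc then o0 else phi p.

Lemma psi_inj : injective psi.
Proof.
move=> p q; rewrite /psi.
case: (p =P cc) => [->|Hp]; case: (q =P cc) => [->|Hq] //.
- move=> E; have := phi_ne1 (p:=q); rewrite in_Om -E => /(_ (introN eqP Hq)).
  by rewrite eqxx.
- move=> E; have := phi_ne1 (p:=p); rewrite in_Om E => /(_ (introN eqP Hp)).
  by rewrite eqxx.
- by apply: phi_inj; rewrite in_Om; apply/eqP.
Qed.

Lemma det_inj k (g : 'I_(m ^ 2) -> 'I_m * 'I_m) : injective g ->
  exists b : nat, \det (\matrix_(r < m ^ 2, c < m ^ 2) Acol phi k (g c) r)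
                = (-1) ^+ b * Xv k ca.
Proof.
move=> Hg.
have Hpg : injective (psi \o g) by apply: inj_comp => //; apply: psi_inj.
pose s : 'S_(m ^ 2) := perm Hpg.
pose E := \matrix_(r < m ^ 2, t < m ^ 2) Acol phi k (g ((s^-1)%g t)) r.
have -> : \matrix_(r < m ^ 2, c < m ^ 2) Acol phi k (g c) r = col_perm s E.
  by apply/matrixP => r c; rewrite !mxE permK.
rewrite col_permE det_mulmx det_perm mulrC; exists (odd_perm (s^-1)%g).
congr (_ * _).
have Hpsi t : psi (g ((s^-1)%g t)) = t.
  by have := permKV s t; rewrite permE.
rewrite -det_tr det_trig; last first.
  apply/is_trig_mxP => i j Hij; rewrite !mxE Acol_val.
  have := Hpsi i; rewrite /psi; case: eqP => [_ _|_ Ei].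
    rewrite add0r; case: eqP => //= Hj0.
    by move: Hij; rewrite Hj0.
  have -> : (nat_of_ord j == val (phi (g ((s^-1)%g i)))) = false.
    by rewrite Ei; apply/eqP => E1; move: Hij; rewrite E1 ltnn.
  rewrite add0r; case: eqP => //= Hj0.
  by move: Hij; rewrite Hj0.
rewrite (bigD1 o0) //= big1 ?mulr1.
  rewrite !mxE Acol_val.
  have := Hpsi o0; rewrite /psi; case: eqP => [->|Hne E0].
    by rewrite add0r eqxx /adg /cc /= rev_ca eqxx.
  have := phi_ne1 (p:= g ((s^-1)%g o0)); rewrite in_Om => /(_ (introN eqP Hne)).
  by rewrite E0 eqxx.
move=> t Ht; rewrite !mxE Acol_val.
have := Hpsi t; rewrite /psi; case: eqP => [_ E0|Hne Et].
  by move: Ht; rewrite E0 eqxx.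
rewrite Et eqxx.
have -> : (nat_of_ord t == 0%N) = false.
  by apply/negbTE; move: Ht; apply: contra => /eqP Et0; apply/eqP/val_inj.
by rewrite addr0.
Qed.

Lemma det_one N (F : nat -> nat -> MP (3 * m)) :
  N = 1%N -> \det (\matrix_(r < N, c < N) F r c) = F 0%N 0%N.
Proof. by move=> ->; rewrite det_mx11 mxE. Qed.


Variable rk : H m -> nat.

Lemma ordered_uniq (e : {set H m}) : uniq (ordered rk e).
Proof. by rewrite /ordered (perm_uniq (permEl (perm_sort _ _))) enum_uniq. Qed.

Lemma ordered_size (e : {set H m}) : size (ordered rk e) = #|e|.
Proof. by rewrite /ordered size_sort cardE. Qed.

Lemma ordered_mem (e : {set H m}) y : (y \in ordered rk e) = (y \in e).
Proof. by rewrite /ordered (perm_mem (permEl (perm_sort _ _))) mem_enum. Qed.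

Lemma nth_ordered (e : {set H m}) (c : nat) : (c < #|e|)%N ->
  nth (y0 m) (ordered rk e) c \in e.
Proof. by move=> Hc; rewrite -ordered_mem mem_nth // ordered_size. Qed.

Lemma detRes_single (L : H m -> nat -> Gamma m) y :
  detRes rk L [set y] = L y 0%N.
Proof.
rewrite /detRes (@det_one _ (fun r c => L (nth (y0 m) (ordered rk [set y]) c) r)) ?cards1 //.
have := @nth_ordered [set y] 0; rewrite cards1 => /(_ isT); rewrite inE => /eqP ->.
by [].
Qed.

Lemma det_edge k N (F : nat -> 'I_m * 'I_m) : N = (m ^ 2)%N ->
  (forall c1 c2, (c1 < N)%N -> (c2 < N)%N -> F c1 = F c2 -> c1 = c2) ->
  exists b : nat, \det (\matrix_(r < N, c < N) Acol phi k (F c) r) = (-1) ^+ b * Xv k ca.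
Proof.
move=> EN; subst N => HF.
apply: (@det_inj k (fun c : 'I_(m ^ 2) => F c)).
by move=> c1 c2 E; apply: val_inj; exact: (HF _ _ (ltn_ord c1) (ltn_ord c2) E).
Qed.

Lemma detRes_inj k (lab : H m -> 'I_m * 'I_m) :
  {in ebig m k &, injective lab} ->
  exists b : nat, detRes rk (fun y => Acol phi k (lab y)) (ebig m k) = (-1) ^+ b * Xv k ca.
Proof.
move=> Hl; rewrite /detRes.
apply: (@det_edge k _ (fun c => lab (nth (y0 m) (ordered rk (ebig m k)) c))).
  exact: (card_ebig m_gt1 m_odd k).
move=> c1 c2 H1 H2 /Hl E.
apply/eqP; rewrite -(nth_uniq (y0 m) _ _ (ordered_uniq (ebig m k))) ?ordered_size //.
by apply/eqP; apply: E; apply: nth_ordered.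
Qed.

Lemma detRes_ne0 k (lab : H m -> 'I_m * 'I_m) (e : {set H m}) :
  detRes rk (fun y => Acol phi k (lab y)) e != 0 -> {in e &, injective lab}.
Proof.
move=> Hd y1 y2 H1 H2 El; apply/eqP; apply: contraR Hd => Hne.
rewrite /detRes; apply/eqP; apply: (@det_noninj #|e| k (fun c : 'I_#|e| => lab (nth (y0 m) (ordered rk e) c))); apply/injectivePn.
have i1 : (index y1 (ordered rk e) < #|e|)%N by rewrite -ordered_size index_mem ordered_mem.
have i2 : (index y2 (ordered rk e) < #|e|)%N by rewrite -ordered_size index_mem ordered_mem.
exists (Ordinal i1); exists (Ordinal i2).
  apply: contra Hne => /eqP [E].
  by have := congr1 (nth (y0 m) (ordered rk e)) E; rewrite !nth_index ?ordered_mem // => ->.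
by rewrite !nth_index ?ordered_mem.
Qed.

Lemma ebig_notin k : ebig m k \notin [set [set y] | y in V m k].
Proof.
apply/imsetP => [[y _ E]]; have := card_ebig m_gt1 m_odd k; rewrite E cards1.
by rewrite -mulnn => E1; nia.
Qed.

Definition sng k (p : 'I_m * 'I_m) : Gamma m := if adg p then Xv k p.1 else 0.

Lemma evalH_eq J : evalH phi rk J =
  \prod_(k < 3) (detRes rk (fun y => Acol phi k (Jc k J y)) (ebig m k) *
                 \prod_(y in V m k) sng k (Jc k J y)).
Proof.
rewrite /evalH; apply: eq_bigr => k _.
rewrite /Eslice big_setU1 ?ebig_notin //=; congr (_ * _).
rewrite big_imset /=; last by move=> y1 y2 _ _; apply: set1_inj.
by apply: eq_bigr => y _; rewrite detRes_single Acol0.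
Qed.

Definition isMon n (p : MP n) (f : nat -> nat) := exists b : nat, p = (-1) ^+ b * mon n f.

Lemma isMon_ext n (p : MP n) f g : isMon p f -> (forall v, (v < n)%N -> f v = g v) -> isMon p g.
Proof. by move=> [b ->] E; exists b; rewrite (eq_mon E). Qed.

Lemma isMon_mul n (p q : MP n) f g : isMon p f -> isMon q g ->
  isMon (p * q) (fun v => (f v + g v)%N).
Proof.
move=> [b1 ->] [b2 ->]; exists (b1 + b2)%N.
by rewrite exprD mulrACA monD.
Qed.

Lemma isMon_prod n (I : Type) (r : seq I) (P : pred I) (p : I -> MP n) (f : I -> nat -> nat) :
  (forall i, P i -> isMon (p i) (f i)) ->
  isMon (\prod_(i <- r | P i) p i) (fun v => \sum_(i <- r | P i) f i v)%N.
Proof.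
move=> Hp; elim: r => [|x r IH].
  exists 0%N; rewrite big_nil expr0 mul1r -(mon0 n); apply: eq_mon => v _.
  by rewrite big_nil.
rewrite big_cons; case Px: (P x).
  apply: isMon_ext (isMon_mul (Hp _ Px) IH) _ => v _.
  by rewrite big_cons Px.
by apply: isMon_ext IH _ => v _; rewrite big_cons Px.
Qed.

Lemma isMon_coef n (p : MP n) f e : isMon p f ->
  (mcoef e p != 0) = all (fun v => e v == f v) (iota 0 n).
Proof.
move=> [b ->]; rewrite mcoef_sign mcoef_mon.
by case: all; rewrite ?mulr1 ?mulr0 ?signr_eq0 ?eqxx.
Qed.

Lemma km_lt (k : 'I_3) (i : 'I_m) : (k * m + i < 3 * m)%N.
Proof. have := ltn_ord k; have := ltn_ord i; nia. Qed.

Lemma Xv_mon k (i : 'I_m) : Xv k i = mon (3 * m) (fun v => (v == k * m + i)%N : nat).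
Proof. by rewrite /Xv mvar_mon // km_lt. Qed.

Lemma eq_km (k k' i j : nat) : (i < m)%N -> (j < m)%N ->
  (k * m + i == k' * m + j) = (k == k') && (i == j).
Proof.
move=> Hi Hj; apply/eqP/andP => [E|[/eqP-> /eqP->]//].
have m0 : (0 < m)%N by case: m m_gt1.
have E1 := congr1 (divn^~ m) E; have E2 := congr1 (modn^~ m) E.
rewrite /= !divnMDl // !divn_small // !addn0 in E1.
rewrite /= !modnMDl !modn_small // in E2.
by rewrite E1 E2.
Qed.

Lemma sum_card (T : finType) (A : {pred T}) (b : T -> bool) :
  (\sum_(y in A) (b y : nat))%N = #|[set y in A | b y]|.
Proof.
rewrite -sum1_card [RHS]big_mkcond [LHS]big_mkcond /=; apply: eq_bigr => y _.
by rewrite !inE; case: (y \in A); case: (b y).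
Qed.

Definition FJ (J : labeling m) (v : nat) : nat :=
  \sum_(k < 3) ((v == k * m + ca)%N + \sum_(y in V m k) (v == k * m + (Jc k J y).1)%N)%N.

Lemma FJ_km J (k0 : 'I_3) (i0 : 'I_m) :
  FJ J (k0 * m + i0) = ((i0 == ca) + #|[set y in V m k0 | (Jc k0 J y).1 == i0]|)%N.
Proof.
rewrite /FJ (bigD1 k0) //= [\sum_(i < 3 | i != k0) _]big1 ?addn0.
  rewrite eq_km ?half_ltm // eqxx /= -sum_card; congr (_ + _)%N.
  by apply: eq_bigr => y _; rewrite eq_km ?ltn_ord // eqxx /= eq_sym.
move=> k Hk; have Hk' : (k0 == k :> nat) = false by apply/negbTE; rewrite eq_sym.
rewrite eq_km ?half_ltm // big1 ?addn0; first by rewrite Hk'.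
by move=> y _; rewrite eq_km ?ltn_ord // Hk'.
Qed.

Definition cnt (i : 'I_m) : nat := `|i - rev_ord i|%N.

Definition comb (J : labeling m) : Prop :=
  [/\ forall k, {in ebig m k &, injective (Jc k J)},
      forall k y, y \in V m k -> adg (Jc k J y) &
      forall k (i : 'I_m), #|[set y in V m k | (Jc k J y).1 == i]| = cnt i].

Lemma isMon_evalH J : (forall k, {in ebig m k &, injective (Jc k J)}) ->
  (forall k y, y \in V m k -> adg (Jc k J y)) -> isMon (evalH phi rk J) (FJ J).
Proof.
move=> Ha Hb; rewrite evalH_eq.
apply: isMon_ext; first (apply: isMon_prod => k _; apply: isMon_mul).
- have [b ->] := detRes_inj (Ha k); exists b; rewrite Xv_mon; reflexivity.
- apply: isMon_prod => y Hy; rewrite /sng (Hb k y Hy) Xv_mon; exists 0%N.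
  by rewrite expr0 mul1r.
by [].
Qed.

Lemma calX_km (k : 'I_3) (i : 'I_m) : calX_exp m (k * m + i) = ((i == ca) + cnt i)%N.
Proof.
rewrite /calX_exp km_lt modnMDl modn_small //; congr (_ + _)%N.
rewrite /cnt /=; have -> : (m.-1 - i = m - i.+1)%N by lia.
by [].
Qed.

Lemma all_km (P : nat -> bool) :
  all P (iota 0 (3 * m)) <-> (forall (k : 'I_3) (i : 'I_m), P (k * m + i)%N).
Proof.
have m0 : (0 < m)%N by case: m m_gt1.
split.
  by move=> /allP Hp k i; apply: Hp; rewrite mem_iota add0n km_lt.
move=> Hp; apply/allP => v; rewrite mem_iota add0n => Hv.
have Hk : (v %/ m < 3)%N by rewrite ltn_divLR.
have Hi : (v %% m < m)%N by rewrite ltn_pmod.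
by rewrite (divn_eq v m); exact: (Hp (Ordinal Hk) (Ordinal Hi)).
Qed.

Lemma mul_nz (R : pzRingType) (a b : R) : a * b != 0 -> a != 0 /\ b != 0.
Proof.
move=> H; split; apply/eqP => E; move: H; by rewrite E ?mul0r ?mulr0 eqxx.
Qed.

Lemma prod_nz (T : finType) (A : {pred T}) (F : T -> Gamma m) x :
  \prod_(y in A) F y != 0 -> x \in A -> F x != 0.
Proof. by move=> H Hx; move: H; rewrite (bigD1 x) //= => /mul_nz []. Qed.

Lemma nonzero_iff J : nonzeroJ phi rk J <-> comb J.
Proof.
split.
  move=> Hnz.
  have Hev : evalH phi rk J != 0.
    by apply/eqP => E; move: Hnz; rewrite /nonzeroJ E mcoef0 eqxx.
  rewrite evalH_eq in Hev.
  have Hk k : detRes rk (fun y => Acol phi k (Jc k J y)) (ebig m k) != 0 /\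
              \prod_(y in V m k) sng k (Jc k J y) != 0.
    by apply: mul_nz; apply: (prod_nz (A := predT)) Hev _.
  have Ha k : {in ebig m k &, injective (Jc k J)} by apply: detRes_ne0 (Hk k).1.
  have Hb k y : y \in V m k -> adg (Jc k J y).
    move=> Hy; have := prod_nz (Hk k).2 Hy; rewrite /sng.
    by case: adg => //; rewrite eqxx.
  split => // k i.
  have := isMon_coef (calX_exp m) (isMon_evalH Ha Hb).
  rewrite Hnz => /esym /all_km /(_ k i) /eqP.
  by rewrite calX_km FJ_km => /eqP; rewrite eqn_add2l => /eqP ->.
move=> [Ha Hb Hc]; rewrite /nonzeroJ (isMon_coef _ (isMon_evalH Ha Hb)).
by apply/all_km => k i; rewrite calX_km FJ_km Hc.
Qed.

Definition ti (p : 'I_m * 'I_m) : 'I_m * 'I_m := (rev_ord p.2, p.1).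

Lemma tiK p : ti (tau p) = p.
Proof. by case: p => i j; rewrite /ti /tau /= rev_ordK. Qed.

Lemma tauK' p : tau (ti p) = p.
Proof. by case: p => i j; rewrite /ti /tau /= rev_ordK. Qed.

Lemma ti3 p : ti (ti (ti p)) = tau p.
Proof. by case: p => i j; rewrite /ti /tau /= rev_ordK. Qed.

Lemma rev_eq_ca (i : 'I_m) : (rev_ord i == ca) = (i == ca).
Proof. by rewrite -{1}rev_ca (inj_eq rev_ord_inj). Qed.

Lemma tau_cc p : (tau p == cc) = (p == cc).
Proof.
case: p => i j; rewrite /tau /cc /= !xpair_eqE rev_eq_ca andbC //.
Qed.

Lemma ti_cc p : (ti p == cc) = (p == cc).
Proof. by rewrite -tau_cc tauK'. Qed.

Definition K0 : 'I_3 := @Ordinal 3 0 isT.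
Definition K1 : 'I_3 := @Ordinal 3 1 isT.
Definition K2 : 'I_3 := @Ordinal 3 2 isT.

Lemma ordS0 : ordS K0 = K1. Proof. by apply/val_inj. Qed.
Lemma ordS1 : ordS K1 = K2. Proof. by apply/val_inj. Qed.
Lemma ordS2 : ordS K2 = K0. Proof. by apply/val_inj. Qed.

Lemma ebig0 : ebig m K0 = V m K1 :|: V m K2 :|: [set y0 m].
Proof. by rewrite /ebig ordS0 ordS1. Qed.
Lemma ebig1 : ebig m K1 = V m K2 :|: V m K0 :|: [set y0 m].
Proof. by rewrite /ebig ordS1 ordS2. Qed.
Lemma ebig2 : ebig m K2 = V m K0 :|: V m K1 :|: [set y0 m].
Proof. by rewrite /ebig ordS2 ordS0. Qed.

Lemma part_lem (f : H m -> 'I_m * 'I_m) (A B : {set H m}) :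
  {in A :|: B :|: [set y0 m] &, injective f} -> #|A :|: B :|: [set y0 m]| = (m ^ 2)%N ->
  (forall y, y \in A -> y \in B -> False) -> y0 m \notin A -> y0 m \notin B ->
  forall x, (x \in f @: A) = (x \notin f @: B) && (x != f (y0 m)).
Proof.
move=> Hf Hc Hd HA HB x.
set E := A :|: B :|: [set y0 m] in Hf Hc.
have Hall : f @: E = setT.
  apply/eqP; rewrite eqEcard subsetT cardsT card_prod !card_ord.
  by rewrite (card_in_imset Hf) Hc mulnn leqnn.
have : x \in f @: E by rewrite Hall inE.
case/imsetP => y Hy ->.
have memf (Z : {set H m}) : Z \subset E -> (f y \in f @: Z) = (y \in Z).
  move=> HZ; apply/imsetP/idP => [[z Hz Ez]|Hy']; last by exists y.
  by rewrite (Hf _ _ Hy (subsetP HZ _ Hz) Ez).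
have y0E : y0 m \in E by rewrite !inE eqxx orbT.
have subA : A \subset E by apply/subsetP => z Hz; rewrite /E !inE Hz.
have subB : B \subset E by apply/subsetP => z Hz; rewrite /E !inE Hz orbT.
rewrite (memf _ subA) (memf _ subB).
have -> : (f y != f (y0 m)) = (y != y0 m).
  by apply/idP/idP; apply: contra => /eqP; [move=> -> | move/(Hf _ _ Hy y0E) ->].
move: Hy; rewrite /E !inE -orbA => /or3P [Ha|Hb|/eqP ->].
- have Hb' : y \notin B by apply/negP => Hb; apply: Hd Ha Hb.
  have Hy0 : y != y0 m by apply/eqP => Ey; move: HA; rewrite -Ey Ha.
  by rewrite Ha Hb' Hy0.
- by rewrite Hb /=; apply/negbTE/negP => Ha; exact: Hd Ha Hb.
- by rewrite (negbTE HA) eqxx andbF.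
Qed.

Lemma img_tau (f g : H m -> 'I_m * 'I_m) (A : {set H m}) :
  (forall y, y \in A -> g y = tau (f y)) -> forall x, (x \in g @: A) = (ti x \in f @: A).
Proof.
move=> Hg x; apply/imsetP/imsetP => [[y Hy ->]|[y Hy E]]; exists y => //.
  by rewrite Hg // tiK.
by rewrite Hg // -E tauK'.
Qed.


Lemma cnt_ca : cnt ca = 0%N.
Proof. by rewrite /cnt rev_ca subrr. Qed.

Lemma ti_ccE : ti cc = cc.
Proof. by rewrite /ti /cc /= rev_ca. Qed.

Section Struct.
Variable J : labeling m.
Hypothesis HJ : comb J.

Lemma row_ne k y : y \in V m k -> (Jc k J y).1 != ca.
Proof.
case: HJ => _ _ Hc Hy; apply/eqP => E.
have := Hc k ca; rewrite cnt_ca => /eqP; rewrite cards_eq0 => /eqP Hs.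
have : y \in [set y in V m k | (Jc k J y).1 == ca] by rewrite inE Hy E eqxx.
by rewrite Hs inE.
Qed.

Lemma adgJ k y : y \in V m k -> (Jc k J y).2 = rev_ord (Jc k J y).1.
Proof. by case: HJ => _ Hb _ Hy; apply/eqP; apply: Hb. Qed.

Lemma tau_rel2 y : y \in V m K2 -> Jc K1 J y = tau (Jc K0 J y).
Proof.
move=> Hy; have := adgJ Hy; rewrite /Jc /tau /=.
by case: (J y) => [[x1 x2] x3] /= ->; rewrite rev_ordK.
Qed.

Lemma tau_rel0 y : y \in V m K0 -> Jc K2 J y = tau (Jc K1 J y).
Proof.
move=> Hy; have := adgJ Hy; rewrite /Jc /tau /=.
by case: (J y) => [[x1 x2] x3] /= ->; rewrite rev_ordK.
Qed.

Lemma tau_rel1 y : y \in V m K1 -> Jc K0 J y = tau (Jc K2 J y).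
Proof.
move=> Hy; have := adgJ Hy; rewrite /Jc /tau /=.
by case: (J y) => [[x1 x2] x3] /= ->; rewrite rev_ordK.
Qed.

Lemma row2 y : y \in V m K2 -> (Jc K0 J y) != cc.
Proof.
move=> Hy; have := row_ne Hy; have := adgJ Hy; rewrite /Jc /cc /=.
case: (J y) => [[x1 x2] x3] /= E; rewrite xpair_eqE.
rewrite E.
by rewrite rev_eq_ca => /negbTE ->.
Qed.

Lemma row0 y : y \in V m K0 -> (Jc K1 J y) != cc.
Proof.
move=> Hy; have := row_ne Hy; have := adgJ Hy; rewrite /Jc /cc /=.
case: (J y) => [[x1 x2] x3] /= E; rewrite xpair_eqE E.
by rewrite rev_eq_ca => /negbTE ->.
Qed.

Lemma row1 y : y \in V m K1 -> (Jc K2 J y) != cc.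
Proof.
move=> Hy; have := row_ne Hy; have := adgJ Hy; rewrite /Jc /cc /=.
case: (J y) => [[x1 x2] x3] /= E; rewrite xpair_eqE E.
by rewrite rev_eq_ca => /negbTE ->.
Qed.

Definition Z0 := [set Jc K0 J y | y in V m K2].
Definition Z1 := [set Jc K1 J y | y in V m K0].
Definition Z2 := [set Jc K2 J y | y in V m K1].

Lemma Z0cc : cc \notin Z0.
Proof. by apply/imsetP => [[y Hy E]]; move: (row2 Hy); rewrite -E eqxx. Qed.
Lemma Z1cc : cc \notin Z1.
Proof. by apply/imsetP => [[y Hy E]]; move: (row0 Hy); rewrite -E eqxx. Qed.
Lemma Z2cc : cc \notin Z2.
Proof. by apply/imsetP => [[y Hy E]]; move: (row1 Hy); rewrite -E eqxx. Qed.

Lemma Vd k k' : k != k' -> forall y, y \in V m k -> y \in V m k' -> False.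
Proof. by move=> Hk y H1 H2; move: Hk; rewrite (V_disj H1 H2) eqxx. Qed.

Lemma E0 x : (x \in Z0) = ~~ (ti x \in Z2) && (x != Jc K0 J (y0 m)).
Proof.
case: HJ => Ha _ _.
rewrite /Z0 (@part_lem (Jc K0 J) (V m K2) (V m K1)) ?y0_notin //.
- by rewrite (img_tau (f := Jc K2 J)) //; exact: tau_rel1.
- by rewrite (setUC (V m K2)) -ebig0; exact: Ha.
- by rewrite (setUC (V m K2)) -ebig0; exact: card_ebig.
- exact: Vd.
Qed.

Lemma E2 x : (x \in Z2) = ~~ (ti x \in Z1) && (x != Jc K2 J (y0 m)).
Proof.
case: HJ => Ha _ _.
rewrite /Z2 (@part_lem (Jc K2 J) (V m K1) (V m K0)) ?y0_notin //.
- by rewrite (img_tau (f := Jc K1 J)) //; exact: tau_rel0.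
- by rewrite (setUC (V m K1)) -ebig2; exact: Ha.
- by rewrite (setUC (V m K1)) -ebig2; exact: card_ebig.
- exact: Vd.
Qed.

Lemma E1 x : (x \in Z1) = ~~ (ti x \in Z0) && (x != Jc K1 J (y0 m)).
Proof.
case: HJ => Ha _ _.
rewrite /Z1 (@part_lem (Jc K1 J) (V m K0) (V m K2)) ?y0_notin //.
- by rewrite (img_tau (f := Jc K0 J)) //; exact: tau_rel2.
- by rewrite (setUC (V m K0)) -ebig1; exact: Ha.
- by rewrite (setUC (V m K0)) -ebig1; exact: card_ebig.
- exact: Vd.
Qed.


Lemma J0cc : Jc K0 J (y0 m) = cc.
Proof. by apply/eqP; have := E0 cc; rewrite ti_ccE (negbTE Z0cc) (negbTE Z2cc) /= eq_sym => /esym/negbFE. Qed.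
Lemma J1cc : Jc K1 J (y0 m) = cc.
Proof. by apply/eqP; have := E1 cc; rewrite ti_ccE (negbTE Z1cc) (negbTE Z0cc) /= eq_sym => /esym/negbFE. Qed.
Lemma J2cc : Jc K2 J (y0 m) = cc.
Proof. by apply/eqP; have := E2 cc; rewrite ti_ccE (negbTE Z2cc) (negbTE Z1cc) /= eq_sym => /esym/negbFE. Qed.

Lemma Jy0 : J (y0 m) = ((ca, ca), ca).
Proof.
have := J0cc; have := J1cc; rewrite /Jc /cc /=.
by case: (J (y0 m)) => [[x1 x2] x3] /= [-> ->] [->].
Qed.

Lemma Z0E x : (x \in Z0) = (x != cc) && (tau x \notin Z0).
Proof.
case: (x =P cc) => [->|/eqP Hx]; first by rewrite (negbTE Z0cc).
rewrite E0 E2 E1 J0cc J1cc J2cc ti3 !ti_cc Hx /=.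
by case: (tau x \in Z0).
Qed.

Lemma Z1E x : (x \in Z1) = (x \in Z0).
Proof.
case: (x =P cc) => [->|/eqP Hx]; first by rewrite (negbTE Z0cc) (negbTE Z1cc).
by rewrite E1 J1cc Hx andbT (Z0E (ti x)) tauK' ti_cc Hx negbK.
Qed.

Lemma Z2E x : (x \in Z2) = (x \in Z0).
Proof. by rewrite E2 Z1E -(Z1E x) E1 J2cc J1cc. Qed.
End Struct.


Lemma cnt_rev (i : 'I_m) : cnt (rev_ord i) = cnt i.
Proof. by rewrite /cnt rev_ordK distnC. Qed.

Lemma mem_tau_img (A : {set 'I_m * 'I_m}) x : (x \in [set tau p | p in A]) = (ti x \in A).
Proof.
apply/imsetP/idP => [[p Hp ->]|H]; first by rewrite tiK.
by exists (ti x); rewrite ?tauK'.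
Qed.

Lemma J1V3_Z0 J : J1V3 J = Z0 J.
Proof.
rewrite /J1V3 /Z0 (_ : inord 2 = K2); last by apply/val_inj; rewrite /= inordK.
by rewrite (_ : ord0 = K0) //; apply/val_inj.
Qed.

Lemma inj_V2 J : comb J -> {in V m K2 &, injective (Jc K0 J)}.
Proof.
case=> Ha _ _ y1 y2 H1 H2; apply: (Ha K0); by rewrite ebig0 !in_setU ?H1 ?H2 ?orbT.
Qed.

Lemma forward J : comb J -> valid (Z0 J).
Proof.
move=> HJ; have [Ha Hb Hc] := HJ.
apply/and4P; split.
- by apply/subsetP => x; rewrite in_Om Z0E // => /andP [].
- by rewrite card_in_imset ?card_V //; apply: inj_V2.
- apply/eqP/setP => x; rewrite in_setD in_Om mem_tau_img (@Z0E J HJ (ti x)) tauK' ti_cc.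
  by rewrite andbC.
apply/forallP => i; apply/eqP.
pose Y := [set y in V m K2 | (Jc K0 J y).1 == i].
have HY : #|Y| = cnt i.
  rewrite -cnt_rev -(Hc K2 (rev_ord i)); apply: eq_card => y.
  rewrite [LHS]in_set [RHS]in_set; case Hy: (y \in V m K2) => //=.
  have := adgJ HJ Hy; rewrite /Jc /=; case: (J y) => [[x1 x2] x3] /= ->.
  by rewrite -{1}(rev_ordK i) (inj_eq rev_ord_inj).
transitivity #|Y|; last exact: HY.
have -> : [set j | (i, j) \in Z0 J] = [set (Jc K0 J y).2 | y in Y].
  apply/setP => j; rewrite inE; apply/imsetP/imsetP => [[y Hy E]|[y Hy ->]].
    by exists y; [rewrite in_set Hy -E eqxx | rewrite -E].
  exists y; first by move: Hy; rewrite inE => /andP [].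
  by move: Hy; rewrite inE => /andP [_ /eqP <-]; case: (Jc K0 J y).
apply: card_in_imset => y1 y2; rewrite [y1 \in _]in_set [y2 \in _]in_set => /andP [H1 /eqP E1] /andP [H2 /eqP E2] E.
apply: (inj_V2 HJ H1 H2).
by move: E1 E2 E; case: (Jc K0 J y1) => a1 b1; case: (Jc K0 J y2) => a2 b2 /= -> -> ->.
Qed.

Lemma H_cases (y : H m) : [\/ y = y0 m, y \in V m K0, y \in V m K1 | y \in V m K2].
Proof.
rewrite !inV; case E0: (val (cd K0 y) != 0%N); first by constructor 2.
case E1: (val (cd K1 y) != 0%N); first by constructor 3.
case E2: (val (cd K2 y) != 0%N); first by constructor 4.
constructor 1; apply: H_ext => k; apply/val_inj.
move/negbFE/eqP: E0 => E0; move/negbFE/eqP: E1 => E1; move/negbFE/eqP: E2 => E2.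
by case: k => [[|[|[|]]] ?] //=; rewrite ?E0 ?E1 ?E2.
Qed.

Lemma k_cases (k : 'I_3) : [\/ k = K0, k = K1 | k = K2].
Proof.
case: k => [[|[|[|//]]] Hk]; [constructor 1|constructor 2|constructor 3]; exact/val_inj.
Qed.

Section Conv.
Variable S : {set 'I_m * 'I_m}.
Hypothesis HS : valid S.

Notation K := (kap m).

Lemma HSO : S \subset Om m. Proof. by case/and4P: HS. Qed.
Lemma HSc : #|S| = K. Proof. by case/and4P: HS => _ /eqP. Qed.
Lemma HSt : [set tau p | p in S] = Om m :\: S. Proof. by case/and4P: HS => _ _ /eqP. Qed.
Lemma HSr (i : 'I_m) : #|[set j | (i, j) \in S]| = cnt i.
Proof. by case/and4P: HS => _ _ _ /forallP /(_ i) /eqP. Qed.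

Lemma S_cc : cc \notin S.
Proof. by apply/negP => /(subsetP HSO); rewrite in_Om eqxx. Qed.

Lemma S_tau x : x \in S -> tau x \notin S.
Proof.
move=> Hx; have : tau x \in [set tau p | p in S] by apply: imset_f.
by rewrite HSt in_setD => /andP [].
Qed.

Lemma S_tau_cc x : x \in S -> tau x != cc.
Proof. by move=> Hx; rewrite tau_cc; apply: contraNneq S_cc => <-. Qed.

Definition ell (j : 'I_K.+1) : 'I_m * 'I_m := nth cc (enum S) j.-1.

Lemma size_enumS : size (enum S) = K.
Proof. by rewrite -cardE HSc. Qed.

Lemma ell_in j : val j != 0%N -> ell j \in S.
Proof.
move=> Hj; rewrite /ell -mem_enum mem_nth // size_enumS.
by move: Hj; have := ltn_ord j; rewrite /=; case: (nat_of_ord j) => [|n] //=.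
Qed.

Lemma ell_inj j j' : val j != 0%N -> val j' != 0%N -> ell j = ell j' -> j = j'.
Proof.
move=> Hj Hj' E; apply/val_inj.
have lt (x : 'I_K.+1) : val x != 0%N -> ((val x).-1 < size (enum S))%N.
  by move=> Hx; rewrite size_enumS; move: Hx; have := ltn_ord x; rewrite /=; case: (nat_of_ord x) => [|n] //=.
have p1 : (0 < val j)%N by rewrite lt0n.
have p2 : (0 < val j')%N by rewrite lt0n.
move/eqP: E; rewrite /ell nth_uniq ?enum_uniq ?lt // => /eqP E.
by rewrite -(prednK p1) -(prednK p2) E.
Qed.

Definition jx (p : 'I_m * 'I_m) : 'I_K.+1 := inord (index p (enum S)).+1.

Lemma jx_val p : p \in S -> val (jx p) = (index p (enum S)).+1.
Proof.
by move=> Hp; rewrite /jx /= inordK // ltnS -size_enumS index_mem mem_enum.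
Qed.

Lemma jx_ne0 p : p \in S -> val (jx p) != 0%N.
Proof. by move=> Hp; rewrite jx_val. Qed.

Lemma ell_jx p : p \in S -> ell (jx p) = p.
Proof. by move=> Hp; rewrite /ell jx_val //= nth_index ?mem_enum. Qed.

Definition Jdef : labeling m := fun y =>
  let t := val y in
  if val t.2 != 0%N then let u := ell t.2 in ((u.1, u.2), rev_ord u.1)
  else if val t.1.2 != 0%N then let u := ell t.1.2 in ((u.2, rev_ord u.1), u.1)
  else if val t.1.1 != 0%N then let u := ell t.1.1 in ((rev_ord u.1, u.1), u.2)
  else ((ca, ca), ca).

Lemma Jdef_V2 y : y \in V m K2 ->
  Jdef y = (((ell (cd K2 y)).1, (ell (cd K2 y)).2), rev_ord (ell (cd K2 y)).1).
Proof. by rewrite inV /Jdef /cd /= => ->. Qed.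

Lemma Jdef_V1 y : y \in V m K1 ->
  Jdef y = (((ell (cd K1 y)).2, rev_ord (ell (cd K1 y)).1), (ell (cd K1 y)).1).
Proof.
move=> Hy; have E2 := cd_eq0 Hy (isT : K1 != K2).
by move: Hy; rewrite inV /Jdef /cd /= => ->; move: E2; rewrite /cd /= => ->.
Qed.

Lemma Jdef_V0 y : y \in V m K0 ->
  Jdef y = ((rev_ord (ell (cd K0 y)).1, (ell (cd K0 y)).1), (ell (cd K0 y)).2).
Proof.
move=> Hy; have E2 := cd_eq0 Hy (isT : K0 != K2); have E1 := cd_eq0 Hy (isT : K0 != K1).
move: Hy E1 E2; rewrite inV /Jdef /cd /= => -> -> ->; by [].
Qed.

Lemma Jdef_y0 : Jdef (y0 m) = ((ca, ca), ca).
Proof. by []. Qed.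


Lemma JcV k y : y \in V m k -> Jc k Jdef y = (rev_ord (ell (cd k y)).1, (ell (cd k y)).1).
Proof.
case: (k_cases k) => -> Hy; rewrite /Jc; [rewrite Jdef_V0 | rewrite Jdef_V1 | rewrite Jdef_V2] => //.
Qed.

Lemma Jc_y0 k : Jc k Jdef (y0 m) = cc.
Proof. by case: (k_cases k) => ->. Qed.

Lemma ell_cd_inj k : {in V m k &, injective (fun y => ell (cd k y))}.
Proof.
move=> y1 y2 H1 H2 E; apply: (V_cd_inj H1 H2); apply: ell_inj => //; by rewrite -inV.
Qed.

Lemma ell_cd_in k y : y \in V m k -> ell (cd k y) \in S.
Proof. by move=> Hy; apply: ell_in; rewrite -inV. Qed.

Lemma inj3 (f gA gB : H m -> 'I_m * 'I_m) (A B : {set H m}) :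
  {in A &, injective gA} -> {in B &, injective gB} ->
  (forall y, y \in A -> gA y \in S) -> (forall y, y \in B -> gB y \in S) ->
  (forall y, y \in A -> f y = tau (gA y)) -> (forall y, y \in B -> f y = gB y) ->
  f (y0 m) = cc -> (forall y, y \in A -> y \in B -> False) ->
  {in A :|: B :|: [set y0 m] &, injective f}.
Proof.
move=> iA iB sA sB fA fB f0 dAB y1 y2.
rewrite !in_setU !in_set1 => /orP[/orP[h1|h1]|/eqP->] /orP[/orP[h2|h2]|/eqP->] //.
- by rewrite (fA _ h1) (fA _ h2) => /(can_inj tiK); apply: iA.
- rewrite (fA _ h1) (fB _ h2) => E; have := S_tau (sA _ h1); by rewrite E sB.
- rewrite (fA _ h1) f0 => E; have := S_tau_cc (sA _ h1); by rewrite E eqxx.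
- rewrite (fB _ h1) (fA _ h2) => E; have := S_tau (sA _ h2); by rewrite -E sB.
- by rewrite (fB _ h1) (fB _ h2); apply: iB.
- rewrite (fB _ h1) f0 => E; have := sB _ h1; by rewrite E (negbTE S_cc).
- rewrite (fA _ h2) f0 => E; have := S_tau_cc (sA _ h2); by rewrite -E eqxx.
- rewrite (fB _ h2) f0 => E; have := sB _ h2; by rewrite -E (negbTE S_cc).
Qed.

Lemma cnt_ell k (i : 'I_m) :
  #|[set y in V m k | rev_ord (ell (cd k y)).1 == i]| = cnt i.
Proof.
rewrite -cnt_rev -HSr.
set Y := [set y in V m k | rev_ord (ell (cd k y)).1 == i].
transitivity #|[set (ell (cd k y)).2 | y in Y]|.
  symmetry; apply: card_in_imset => y1 y2.
  rewrite [y1 \in _]in_set [y2 \in _]in_set => /andP [H1 /eqP E1] /andP [H2 /eqP E2] E.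
  apply: (ell_cd_inj H1 H2).
  move: E1 E2 E; case: (ell (cd k y1)) => a1 b1; case: (ell (cd k y2)) => a2 b2 /= E1 E2 ->.
  by congr pair; apply: rev_ord_inj; rewrite E1 E2.
apply: eq_card => j; rewrite in_set; apply/imsetP/idP.
  case=> y; rewrite in_set => /andP [Hy /eqP E1] ->.
  have := ell_cd_in Hy; rewrite -E1 rev_ordK.
  by case: (ell (cd k y)).
move=> Hp; exists (mkV k (jx (rev_ord i, j))).
  by rewrite in_set mkV_in ?jx_ne0 // cd_mkV ell_jx //= rev_ordK eqxx.
by rewrite cd_mkV ell_jx.
Qed.

Lemma Vd' k k' : k != k' -> forall y, y \in V m k -> y \in V m k' -> False.
Proof. by move=> Hk y H1 H2; move: Hk; rewrite (V_disj H1 H2) eqxx. Qed.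

Lemma Jc0_V1 y : y \in V m K1 -> Jc K0 Jdef y = tau (ell (cd K1 y)).
Proof. by move=> Hy; rewrite /Jc Jdef_V1 //= /tau; case: (ell (cd K1 y)). Qed.
Lemma Jc0_V2 y : y \in V m K2 -> Jc K0 Jdef y = ell (cd K2 y).
Proof. by move=> Hy; rewrite /Jc Jdef_V2 //=; case: (ell (cd K2 y)). Qed.
Lemma Jc1_V2 y : y \in V m K2 -> Jc K1 Jdef y = tau (ell (cd K2 y)).
Proof. by move=> Hy; rewrite /Jc Jdef_V2 //= /tau; case: (ell (cd K2 y)). Qed.
Lemma Jc1_V0 y : y \in V m K0 -> Jc K1 Jdef y = ell (cd K0 y).
Proof. by move=> Hy; rewrite /Jc Jdef_V0 //=; case: (ell (cd K0 y)). Qed.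
Lemma Jc2_V0 y : y \in V m K0 -> Jc K2 Jdef y = tau (ell (cd K0 y)).
Proof. by move=> Hy; rewrite /Jc Jdef_V0 //= /tau; case: (ell (cd K0 y)). Qed.
Lemma Jc2_V1 y : y \in V m K1 -> Jc K2 Jdef y = ell (cd K1 y).
Proof. by move=> Hy; rewrite /Jc Jdef_V1 //=; case: (ell (cd K1 y)). Qed.

Lemma comb_Jdef : comb Jdef.
Proof.
split.
- move=> k; case: (k_cases k) => ->; [rewrite ebig0 | rewrite ebig1 | rewrite ebig2].
  + apply: (@inj3 _ (fun y => ell (cd K1 y)) (fun y => ell (cd K2 y)));
      try exact: ell_cd_inj; try exact: ell_cd_in; try exact: Jc_y0; try exact: Vd'.
    exact: Jc0_V1. exact: Jc0_V2.
  + apply: (@inj3 _ (fun y => ell (cd K2 y)) (fun y => ell (cd K0 y)));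
      try exact: ell_cd_inj; try exact: ell_cd_in; try exact: Jc_y0; try exact: Vd'.
    exact: Jc1_V2. exact: Jc1_V0.
  + apply: (@inj3 _ (fun y => ell (cd K0 y)) (fun y => ell (cd K1 y)));
      try exact: ell_cd_inj; try exact: ell_cd_in; try exact: Jc_y0; try exact: Vd'.
    exact: Jc2_V0. exact: Jc2_V1.
- by move=> k y Hy; rewrite JcV // /adg /= rev_ordK.
- move=> k i; rewrite -(cnt_ell k i); apply: eq_card => y.
  rewrite [LHS]in_set [RHS]in_set; case Hy: (y \in V m k) => //=.
  by rewrite JcV.
Qed.

Lemma J1V3_Jdef : J1V3 Jdef = S.
Proof.
rewrite J1V3_Z0 /Z0; apply/setP => p; apply/imsetP/idP.
  by case=> y Hy ->; rewrite Jc0_V2 // ell_cd_in.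
move=> Hp; exists (mkV K2 (jx p)); first by rewrite mkV_in ?jx_ne0.
by rewrite Jc0_V2 ?mkV_in ?jx_ne0 // cd_mkV ell_jx.
Qed.


Lemma inV_iff y k0 k : y \in V m k0 -> (y \in V m k) = (k == k0).
Proof.
move=> Hy; case: (k =P k0) => [->//|/eqP Hk]; apply/negbTE/negP => Hy'.
by apply: (Vd' Hk Hy').
Qed.

Lemma uniq_J J' : comb J' -> J1V3 J' = S ->
  exists sigma : {perm H m},
    (forall k, sigma @: V m k = V m k) /\ J' = (fun y => Jdef (sigma y)).
Proof.
move=> HJ' HS'; rewrite J1V3_Z0 in HS'.
have inS2 y : y \in V m K2 -> Jc K0 J' y \in S.
  by move=> Hy; rewrite -HS'; apply: imset_f.
have inS1 y : y \in V m K1 -> Jc K2 J' y \in S.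
  by move=> Hy; rewrite -HS' -(Z2E HJ'); apply: imset_f.
have inS0 y : y \in V m K0 -> Jc K1 J' y \in S.
  by move=> Hy; rewrite -HS' -(Z1E HJ'); apply: imset_f.
pose sg y := if y \in V m K2 then mkV K2 (jx (Jc K0 J' y))
             else if y \in V m K1 then mkV K1 (jx (Jc K2 J' y))
             else if y \in V m K0 then mkV K0 (jx (Jc K1 J' y)) else y.
have sgV2 y : y \in V m K2 -> sg y = mkV K2 (jx (Jc K0 J' y)) by rewrite /sg => ->.
have sgV1 y : y \in V m K1 -> sg y = mkV K1 (jx (Jc K2 J' y)).
  by move=> Hy; rewrite /sg (inV_iff K2 Hy) Hy.
have sgV0 y : y \in V m K0 -> sg y = mkV K0 (jx (Jc K1 J' y)).
  by move=> Hy; rewrite /sg (inV_iff K2 Hy) (inV_iff K1 Hy) Hy.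
have sgy0 : sg (y0 m) = y0 m by rewrite /sg !(negbTE (y0_notin _ _)).
clearbody sg.
have sgE y : Jdef (sg y) = J' y.
  case: (H_cases y) => [->|Hy|Hy|Hy].
  - by rewrite sgy0 Jdef_y0 (Jy0 HJ').
  - rewrite sgV0 // Jdef_V0 ?mkV_in ?jx_ne0 ?inS0 // cd_mkV ell_jx ?inS0 //.
    have := adgJ HJ' Hy; rewrite /Jc /=.
    by case: (J' y) => [[x1 x2] x3] /= ->; rewrite rev_ordK.
  - rewrite sgV1 // Jdef_V1 ?mkV_in ?jx_ne0 ?inS1 // cd_mkV ell_jx ?inS1 //.
    have := adgJ HJ' Hy; rewrite /Jc /=.
    by case: (J' y) => [[x1 x2] x3] /= ->; rewrite rev_ordK.
  - rewrite sgV2 // Jdef_V2 ?mkV_in ?jx_ne0 ?inS2 // cd_mkV ell_jx ?inS2 //.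
    have := adgJ HJ' Hy; rewrite /Jc /=.
    by case: (J' y) => [[x1 x2] x3] /= ->; rewrite rev_ordK.
have sg_in k y : (sg y \in V m k) = (y \in V m k).
  case: (H_cases y) => [->|Hy|Hy|Hy]; first by rewrite sgy0.
  - by rewrite (inV_iff k Hy) sgV0 // (inV_iff k (mkV_in _ (jx_ne0 (inS0 _ Hy)))).
  - by rewrite (inV_iff k Hy) sgV1 // (inV_iff k (mkV_in _ (jx_ne0 (inS1 _ Hy)))).
  - by rewrite (inV_iff k Hy) sgV2 // (inV_iff k (mkV_in _ (jx_ne0 (inS2 _ Hy)))).
have [Ha _ _] := HJ'.
have sg_inj : injective sg.
  move=> y1 y2 E.
  have EJ : J' y1 = J' y2 by rewrite -(sgE y1) -(sgE y2) E.
  have Ek k : (y1 \in V m k) = (y2 \in V m k) by rewrite -(sg_in k y1) -(sg_in k y2) E.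
  case: (H_cases y1) => [E1|h1|h1|h1].
  - case: (H_cases y2) => [->//|h2|h2|h2]; rewrite -(Ek _) E1 in h2;
      by move: h2; rewrite (negbTE (y0_notin _ _)).
  - have h2 : y2 \in V m K0 by rewrite -Ek.
    by apply: (Ha K1); rewrite ?ebig1 ?in_setU ?h1 ?h2 ?orbT // /Jc EJ.
  - have h2 : y2 \in V m K1 by rewrite -Ek.
    by apply: (Ha K2); rewrite ?ebig2 ?in_setU ?h1 ?h2 ?orbT // /Jc EJ.
  - have h2 : y2 \in V m K2 by rewrite -Ek.
    by apply: (Ha K0); rewrite ?ebig0 ?in_setU ?h1 ?h2 ?orbT // /Jc EJ.
exists (perm sg_inj); split.
  move=> k; apply/eqP; rewrite eqEcard card_imset; last exact: perm_inj.
  rewrite leqnn andbT; apply/subsetP => z /imsetP [y Hy ->].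
  by rewrite permE sg_in.
by apply: functional_extensionality => y; rewrite permE sgE.
Qed.
End Conv.


Lemma main_sec : (forall J : labeling m, nonzeroJ phi rk J -> valid (J1V3 J)) /\
  (forall S : {set 'I_m * 'I_m}, valid S ->
     exists J : labeling m,
       [/\ nonzeroJ phi rk J, J1V3 J = S &
           forall J' : labeling m, nonzeroJ phi rk J' -> J1V3 J' = S ->
             exists sigma : {perm H m},
               (forall k : 'I_3, sigma @: V m k = V m k) /\
               J' = (fun y => J (sigma y))]).
Proof.
split.
  move=> J /nonzero_iff HJ; rewrite J1V3_Z0; exact: forward.
move=> S HS; exists (Jdef S); split.
- by apply/nonzero_iff; apply: comb_Jdef.
- exact: J1V3_Jdef.
- by move=> J' /nonzero_iff HJ' HS'; apply: uniq_J.
Qed.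

End B.

Theorem proposition6p5 (m : nat) (m_gt1 : (1 < m)%N) (m_odd : odd m)
    (phi : 'I_m * 'I_m -> 'I_(m ^ 2))
    (phi_inj : {in Om m &, injective phi})
    (phi_ne1 : forall p, p \in Om m -> val (phi p) != 0%N)
    (rk : H m -> nat) (rk_inj : injective rk) :
  (forall J : labeling m, nonzeroJ phi rk J -> valid (J1V3 J)) /\
  (forall S : {set 'I_m * 'I_m}, valid S ->
     exists J : labeling m,
       [/\ nonzeroJ phi rk J, J1V3 J = S &
           forall J' : labeling m, nonzeroJ phi rk J' -> J1V3 J' = S ->
             exists sigma : {perm H m},
               (forall k : 'I_3, sigma @: V m k = V m k) /\
               J' = (fun y => J (sigma y))]).
Proof.
by apply: main_sec.
Qed.
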